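(* Let $m \equiv 3 \pmod 4$ with $m > 3$, $n = 3^m - 1$, $v = (3^{(m-1)/2}-1)/2$ and $\delta = (3^{(m-1)/2}+11)/2$. Then $\gcd(v,n) = 1$, and, setting $T_{(0,1,m)}(v) = \{ vi \bmod n : i \in T_{(0,1,m)}\}$, we have $\{n-(\delta-1), \ldots, n-2, n-1\} \subseteq T_{(0,1,m)}(v)$.
   Context: For an integer $0 \le j \le n-1$ with $3$-adic expansion $j = \sum_{t=0}^{m-1} j_t 3^t$, $j_t \in \{0,1,2\}$, let $w_3(j) = \sum_{t=0}^{m-1} j_t$. For distinct $i_1,i_2 \in \{0,1,2,3\}$, $T_{(i_1,i_2,m)} = \{1 \le j \le n-1 : w_3(j) \equiv i_1 \text{ or } i_2 \pmod 4\}$. For an integer $b$, $b \bmod n$ is the unique $b_0 \in \{0,\ldots,n-1\}$ with $b \equiv b_0 \pmod n$. *)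

(* Defs.v *)
From mathcomp Require Import all_boot.
Set Implicit Arguments. Unset Strict Implicit. Unset Printing Implicit Defensive.

Definition w3 (m j : nat) : nat := \sum_(t < m) ((j %/ 3 ^ t) %% 3).

Definition inT (i1 i2 m j : nat) : bool :=
  (1 <= j <= (3 ^ m - 1) - 1) && ((w3 m j %% 4 == i1) || (w3 m j %% 4 == i2)).

(* Main.v *)
Require Import Defs.
From mathcomp Require Import all_boot.
From mathcomp Require Import zify.

Lemma w3_split k l a b : a < 3 ^ k -> w3 (k + l) (a + 3 ^ k * b) = w3 k a + w3 l b.
Proof.
move=> ha; rewrite /w3 big_split_ord /=; congr (_ + _).
- apply: eq_bigr => i _ /=.
  have hik : i < k := ltn_ord i.
  have -> : a + 3 ^ k * b = (3 ^ (k - i) * b) * 3 ^ i + a.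
    by rewrite mulnAC -expnD subnK 1?ltnW // addnC.
  rewrite divnMDl ?expn_gt0 //.
  have -> : 3 ^ (k - i) = (3 ^ (k - i).-1) * 3.
    by rewrite -expnSr prednK // subn_gt0.
  by rewrite -mulnA mulnC [3 * _]mulnC -mulnA (mulnC 3) mulnA modnMDl.
- apply: eq_bigr => i _ /=.
  rewrite expnD divnMA; congr (_ %% 3); congr (_ %/ _).
  by rewrite addnC mulnC divnMDl ?expn_gt0 // divn_small // addn0.
Qed.

Lemma w3_0 k : w3 k 0 = 0.
Proof. by rewrite /w3 big1 // => i _; rewrite div0n mod0n. Qed.

Lemma w3_digit k d e : d < 3 -> w3 k.+1 (d + 3 * e) = d + w3 k e.
Proof.
move=> hd; have := @w3_split 1 k d e; rewrite expn1 => ->; last by [].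
by rewrite /w3 big_ord1 expn0 divn1 modn_small.
Qed.

Lemma w3_odd k a : a < 3 ^ k -> odd (w3 k a) = odd a.
Proof.
elim: k a => [|k IH] a ha.
  by move: ha; rewrite expn0 ltnS leqn0 => /eqP ->; rewrite w3_0.
have ea : a = a %% 3 + 3 * (a %/ 3) by rewrite addnC mulnC -divn_eq.
rewrite ea w3_digit ?ltn_mod // oddD IH; last first.
  by rewrite ltn_divLR // mulnC -expnS.
by rewrite oddD oddM.
Qed.

Lemma w3_three h d p q : d < 3 -> p < 3 ^ h ->
  w3 (1 + h + h) (d + 3 * (p + 3 ^ h * q)) = d + w3 h p + w3 h q.
Proof.
move=> hd hp; rewrite add1n.
have := @w3_split h.+1 h (d + 3 * p) q.
rewrite expnS mulnDr addnA -mulnA => ->; last by lia.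
by rewrite w3_digit // addnA.
Qed.

Lemma w3_small h d : 0 < h -> d < 3 -> w3 h d = d.
Proof.
case: h => // h _ hd. have := @w3_digit h d 0 hd. by rewrite muln0 addn0 w3_0 addn0.
Qed.

Lemma modhelp x t s N : 0 < t <= N -> x + t = s * N -> x %% N = N - t.
Proof.
move=> /andP [t0 tN] e.
have s0 : 0 < s by case: s e => //= e; lia.
have hN : N <= s * N by rewrite leq_pmull.
have -> : x = (s - 1) * N + (N - t) by rewrite mulnBl mul1n; lia.
by rewrite modnMDl modn_small //; lia.
Qed.

Theorem lemma6 (m : nat) (hm4 : m %% 4 = 3) (hm : 3 < m) :
  let n := 3 ^ m - 1 in
  let v := (3 ^ ((m - 1) %/ 2) - 1) %/ 2 in
  let delta := (3 ^ ((m - 1) %/ 2) + 11) %/ 2 in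
  coprime v n /\
  (forall k, n - (delta - 1) <= k <= n - 1 ->
     exists i, inT 0 1 m i /\ (v * i) %% n = k).
Proof.
move=> n v delta.
set q := m %/ 4.
have em : m = 1 + (2 * q + 1) + (2 * q + 1) by lia.
have hq : 1 <= q by lia.
set h := 2 * q + 1.
have eh : (m - 1) %/ 2 = h by lia.
set A := 3 ^ h.
have A4 : A %% 4 = 3.
  rewrite /A /h expnD expnM -modnMml -modnXm /=.
  by rewrite exp1n.
have A27 : 27 <= A.
  rewrite /A /h (_ : 27 = 3 ^ 3) // leq_exp2l //; lia.
have ev : v = A %/ 2.
  rewrite /v eh -/A. clear -A4. lia.
have eA : A = 2 * v + 1 by clear -A4 ev; lia.
have vodd : odd v by clear -A4 ev; lia.
have hmm : m = 1 + h + h by exact: em.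
have en : n = 3 * A * A - 1 by rewrite /n hmm expnD expnD expn1 /A.
have edelta : delta = v + 6 by rewrite /delta eh -/A; clear -A4 ev; lia.
have eqA : A = 3 ^ h by [].
have en0 : n = 3 ^ m - 1 by [].
clearbody n v delta A h q.
have v13 : 13 <= v by clear -A27 eA; lia.
have eN : n = 12 * v * v + 12 * v + 2.
  rewrite en eA; clear; nia.
split.
  rewrite -coprime_modr.
  have -> : n %% v = 2 %% v.
    rewrite (_ : n = (12 * v + 12) * v + 2); last by rewrite eN; clear; nia.
    by rewrite modnMDl.
  by rewrite coprime_modr coprimen2.
move=> k /andP [hk1 hk2].
rewrite edelta in hk1.
have [t ht1 ek] : exists2 t, 1 <= t <= v + 5 & k = n - t.
  exists (n - k); [clear -hk1 hk2 v13 eN; lia | clear -hk1 hk2 v13 eN; lia].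
rewrite ek; clear k hk1 hk2 ek.
have inTE : forall i d p r, i = d + 3 * (p + A * r) -> d < 3 -> p < A ->
   1 <= i <= n - 1 -> (d + w3 h p + w3 h r) %% 4 <= 1 -> inT 0 1 m i.
  move=> i d p r -> hd hp hi hw.
  rewrite /inT -en0 hi /= hmm eqA w3_three -?eqA //.
  move: hw; set w := (d + w3 h p + w3 h r) %% 4; clear; lia.
have tN : 0 < t <= n by rewrite eN; clear -ht1 v13; lia.
case: (boolP (odd t)) => todd; last first.
  have [s es] : exists s, t = 2 * s by exists t./2; clear -todd; lia.
  exists (3 * t * (A + 1)); split.
    apply: (inTE _ 0 t t); [clear; lia | done | clear -ht1 eA v13; lia | | ].
      rewrite eN es eA; rewrite es in ht1; clear -ht1 v13; nia.
    have := @w3_odd h t ltac:(rewrite -eqA; clear -ht1 eA v13; lia).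
    rewrite (negbTE todd) => hw.
    have : ~~ odd (w3 h t) by rewrite hw.
    set w := w3 h t. clear; lia.
  apply: (@modhelp _ t s n tN).
  rewrite eN es eA; clear; nia.
case: (leqP t v) => htv.
  have [r er] : exists r, v + t = 2 * r.
    exists (v + t)./2; move: vodd todd; clear; lia.
  exists (1 + 3 * ((v + t) + A * (v + t))); split.
    apply: (inTE _ 1 (v + t) (v + t)); [clear; lia | done | clear -htv eA; lia | | ].
      rewrite eN eA; clear -htv v13; nia.
    have := @w3_odd h (v + t) ltac:(rewrite -eqA; clear -htv eA; lia).
    rewrite oddD vodd todd /= => hw.
    have : ~~ odd (w3 h (v + t)) by rewrite hw.
    set w := w3 h (v + t). clear; lia.
  apply: (@modhelp _ t r n tN).
  rewrite eN eA er; clear -er; nia.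
have [et | et] : t = v + 2 \/ t = v + 4 by move: ht1 htv todd vodd; clear; lia.
  exists (2 + 3 * (1 + A * 2)); split.
    apply: (inTE _ 2 1 2); [clear; lia | done | clear -A27; lia | | ].
      rewrite eN eA; clear -v13; nia.
    have h0 : 0 < h by clear -em hmm hq; lia.
    rewrite !w3_small //.
  apply: (@modhelp _ t 1 n tN).
  rewrite eN eA et; clear; nia.
exists (2 + 3 * (3 + A * 4)); split.
  apply: (inTE _ 2 3 4); [clear; lia | done | clear -A27; lia | | ].
    rewrite eN eA; clear -v13; nia.
  have h0 : 0 < h by clear -em hmm hq; lia.
  rewrite -(prednK h0) (_ : 3 = 0 + 3 * 1) // (_ : 4 = 1 + 3 * 1) //.
  rewrite !w3_digit // !w3_small //.
  by clear -em hmm hq; lia.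
apply: (@modhelp _ t 2 n tN).
rewrite eN eA et; clear; nia.
Qed.
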